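(* Consider binary node classification with classes $\{0,1\}$, let $k\in\{0,1\}$, and let $c_0,c_1\in(0,1)$ be the class homophily parameters. Assume the classes are balanced ($P(\hat{Y}=0)=P(\hat{Y}=1)$), the graph is heterophilic ($c_k<1-c_{1-k}$), and $0<c_k<0.5$. If two nodes $n$ and $m$ have the same degree $d$ and $|\mathcal{N}_k(n)| > |\mathcal{N}_k(m)|$, then $$P\big(\hat{Y}_{n} = k \mid \{Y_j\}_{j\in\mathcal{N}(n)}\big) < P\big(\hat{Y}_{m} = k \mid \{Y_j\}_{j\in\mathcal{N}(m)}\big).$$
   Context: Model: each node $i$ has a (latent/soft) class $\hat{Y}_i\in\{0,1\}$, and each neighbor $j\in\mathcal{N}(i)$ has an observed label $Y_j\in\{0,1\}$. Given $\hat{Y}_i$, the neighbor labels are conditionally independent with $P(Y_j=k\mid \hat{Y}_i=k)=c_k$ and $P(Y_j=1-k\mid\hat{Y}_i=k)=1-c_k$ for $k\in\{0,1\}$ ($c_k$ is the class homophily of class $k$). The posterior is obtained by Bayes' rule: $P(\hat Y_i=k\mid\{Y_j=y_j\}_{j\in\mathcal N(i)})\propto P(\hat Y_i=k)\prod_{j\in\mathcal N(i)}P(Y_j=y_j\mid \hat Y_i=k)$, conditioning on the observed neighbor labels. Notation: $\mathcal{N}_k(i)=\{j\in\mathcal{N}(i): y_j=k\}$, $\mathcal{N}_{1-k}(i)=\{j\in\mathcal{N}(i): y_j=1-k\}$, and the degree of $i$ is $|\mathcal N(i)|=|\mathcal{N}_k(i)|+|\mathcal{N}_{1-k}(i)|$.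 *)

(* Defs.v *)
(* Classes are encoded as bool: false = class 0, true = class 1. *)
From mathcomp Require Import all_boot all_order all_algebra.
Set Implicit Arguments. Unset Strict Implicit. Unset Printing Implicit Defensive.
Import Order.TTheory GRing.Theory Num.Theory.
Local Open Scope ring_scope.

Section Model.
Variables (R : realFieldType) (V : finType).

(* P(Y_j = y | \hat Y_i = k) : equals c_k if y = k, and 1 - c_k otherwise. *)
Definition nbr_lik (c : bool -> R) (k y : bool) : R :=
  if y == k then c k else 1 - c k.

Definition joint (prior c : bool -> R) (nbr : V -> {set V}) (y : V -> bool)
    (i : V) (k : bool) : R :=
  prior k * \prod_(j in nbr i) nbr_lik c k (y j).

Definition posterior (prior c : bool -> R) (nbr : V -> {set V}) (y : V -> bool)
    (i : V) (k : bool) : R :=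
  joint prior c nbr y i k / \sum_(k' : bool) joint prior c nbr y i k'.

Definition nbr_k (nbr : V -> {set V}) (y : V -> bool) (i : V) (k : bool) : {set V} :=
  [set j in nbr i | y j == k].

End Model.

(* Main.v *)
Require Import Defs.
From mathcomp Require Import all_boot all_order all_algebra.
From mathcomp Require Import ring lra zify.
Import Order.TTheory GRing.Theory Num.Theory.
Local Open Scope ring_scope.

Lemma prod_split (R : realFieldType) (V : finType) (nbr : V -> {set V}) (y : V -> bool)
  (k : bool) (F : bool -> R) i :
  \prod_(j in nbr i) F (y j) =
  F k ^+ #|nbr_k nbr y i k| * F (~~k) ^+ (#|nbr i| - #|nbr_k nbr y i k|).
Proof.
rewrite (bigID (fun j => y j == k)) /=.
have e1: \prod_(j in nbr i | y j == k) F (y j) = \prod_(j in nbr_k nbr y i k) F k.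
  by apply: eq_big => j; [rewrite /nbr_k inE | move/andP=>[_ /eqP ->]].
have e2: \prod_(j in nbr i | y j != k) F (y j)
    = \prod_(j in [set j in nbr i | y j != k]) F (~~k).
  apply: eq_big => j; first by rewrite inE.
  have h: forall a b : bool, a != b -> F a = F (~~b) by do 2!case.
  by move/andP=>[_ /h].
have c: #|[set j in nbr i | y j != k]| = (#|nbr i| - #|nbr_k nbr y i k|)%N.
  rewrite -(cardID (fun j => y j == k) (nbr i)).
  have -> : #|[predI nbr i & (fun j => y j == k)]| = #|nbr_k nbr y i k|.
    by apply: eq_card => j; rewrite /nbr_k !inE.
  have -> : #|[predD nbr i & (fun j => y j == k)]| = #|[set j in nbr i | y j != k]|.
    by apply: eq_card => j; rewrite !inE andbC.
  by rewrite addKn.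
by rewrite e1 e2 !prodr_const c.
Qed.

Lemma frac_lt (R : realFieldType) (x y x' y' : R) :
  0 < x -> 0 < y -> 0 < x' -> 0 < y' -> x * y' < x' * y ->
  x / (x + y) < x' / (x' + y').
Proof.
move=> hx hy hx' hy' h.
rewrite ltr_pdivrMr ?addr_gt0 // mulrAC ltr_pdivlMr ?addr_gt0 //.
nra.
Qed.

Theorem mainTheorem3 (R : realFieldType) (V : finType)
    (nbr : V -> {set V}) (y : V -> bool)
    (prior c : bool -> R) (k : bool) (n m : V) (d : nat) :
    (forall b, 0 <= prior b) -> prior false + prior true = 1 ->
    (forall b, 0 < c b < 1) ->
    prior false = prior true ->
    c k < 1 - c (~~ k) ->
    0 < c k < 1 / 2 ->
    #|nbr n| = d -> #|nbr m| = d ->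
    (#|nbr_k nbr y m k| < #|nbr_k nbr y n k|)%N ->
    posterior prior c nbr y n k < posterior prior c nbr y m k.
Proof.
move=> _ hsum hc heq hhet _ hdn hdm hlt.
have hp: forall b, prior b = 1/2.
  by case; lra.
have hsnd: (#|nbr_k nbr y n k| <= d)%N.
  rewrite -hdn; apply: subset_leq_card; apply/subsetP => j; rewrite inE => /andP[] //.
set sn := #|nbr_k nbr y n k| in hlt hsnd *.
set sm := #|nbr_k nbr y m k| in hlt *.
have hsb: forall i, \sum_(k' : bool) joint prior c nbr y i k' =
    joint prior c nbr y i k + joint prior c nbr y i (~~k).
  by move=> i; rewrite big_bool; case: k {hhet hlt hsnd sn sm}; rewrite //= addrC.
rewrite /posterior !hsb /joint !(prod_split R V nbr y k) hdn hdm -/sn -/sm !hp.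
rewrite /nbr_lik eqxx.
have -> : (~~ k == k) = false by case: k {hhet hsb hlt hsnd sn sm}.
have -> : (k == ~~ k) = false by case: k {hhet hsb hlt hsnd sn sm}.
rewrite eqxx.
have [ha0 ha1] := andP (hc k).
have [hb0 hb1] := andP (hc (~~k)).
set a := c k in ha0 ha1 hhet *.
set b := c (~~k) in hb0 hb1 hhet *.
have -> : sn = (sm + (sn - sm))%N by lia.
have -> : (d - sm = (d - (sm + (sn - sm))) + (sn - sm))%N by lia.
set t := (sn - sm)%N.
have ht : (0 < t)%N by rewrite /t; lia.
set u := (d - (sm + t))%N.
have h1a : 0 < 1 - a by lra.
have h1b : 0 < 1 - b by lra.
apply: frac_lt; rewrite ?mulr_gt0 ?exprn_gt0 ?divr_gt0 ?invr_gt0 ?ltr0n //.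
rewrite !exprD.
set C := 1/2 * a ^+ sm * (1-a) ^+ u * (1/2 * (1-b) ^+ sm * b ^+ u).
have e1 : 1 / 2 * (a ^+ sm * a ^+ t * (1 - a) ^+ u) * (1 / 2 * ((1 - b) ^+ sm * (b ^+ u * b ^+ t)))
   = C * (a * b) ^+ t by rewrite /C exprMn; ring.
have e2 : 1 / 2 * (a ^+ sm * ((1 - a) ^+ u * (1 - a) ^+ t)) * (1 / 2 * ((1 - b) ^+ sm * (1 - b) ^+ t * b ^+ u))
   = C * ((1 - a) * (1 - b)) ^+ t by rewrite /C exprMn; ring.
rewrite e1 e2 ltr_pM2l; last by rewrite /C !mulr_gt0 ?exprn_gt0 ?divr_gt0 ?invr_gt0 ?ltr0n.
rewrite ltrXn2r ?mulr_ge0 ?ltW //; first by rewrite -lt0n.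
nra.
Qed.
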